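(* Let $(\mathfrak{Q},\&,e)$ be a non-trivial unital quantale. Consider the following full subcategories of $\mathfrak{Q}\text{-}\mathbf{FOrd}$: $\mathfrak{Q}\text{-}\mathbf{POrd}$ (objects with $|x|\in\{\bot,e\}$ for all $x$), $\mathfrak{Q}\text{-}\mathbf{Ord}$ (objects with $|x|=e$ for all $x$), $\mathbf{POrd}$ (objects with $|x|\in\{\bot,e\}$ and $\alpha(x,y)\in\{\bot,e\}$ for all $x,y$), and $\mathbf{Ord}$ (objects with $|x|=e$ and $\alpha(x,y)\in\{\bot,e\}$ for all $x,y$). Then all the inclusions $\mathbf{Ord}\subseteq\mathbf{POrd}\subseteq\mathfrak{Q}\text{-}\mathbf{POrd}$, $\mathbf{Ord}\subseteq\mathfrak{Q}\text{-}\mathbf{Ord}\subseteq\mathfrak{Q}\text{-}\mathbf{POrd}\subseteq\mathfrak{Q}\text{-}\mathbf{FOrd}$ are coreflective. Specifically: (1) $\mathbf{POrd}$ is a coreflective subcategory of $\mathfrak{Q}\text{-}\mathbf{POrd}$, with the coreflector sending each $(X,|\cdot|,\alpha)\in\mathfrak{Q}\text{-}\mathbf{POrd}$ to its underlying preorder, i.e. to $(X,|\cdot|,\alpha')$ where $\alpha'(x,y)=e$ if $|x|=|y|=e$ and $e\le\alpha(x,y)$, and $\alpha'(x,y)=\bot$ otherwise; similarly $\mathbf{Ord}$ is a coreflective subcategory of $\mathfrak{Q}\text{-}\mathbf{Ord}$ via the underlying preorder. (2) $\mathfrak{Q}\text{-}\mathbf{Ord}$ is a coreflective subcategory of $\mathfrak{Q}\text{-}\mathbf{POrd}$,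 with the coreflector sending $(X,|\cdot|,\alpha)$ to $X_{\{e\}}=\{x\in X\mid |x|=e\}$ with the inherited $\mathfrak{Q}$-preorder; in particular $\mathbf{Ord}$ is a coreflective subcategory of $\mathbf{POrd}$. (3) $\mathfrak{Q}\text{-}\mathbf{POrd}$ is a coreflective subcategory of $\mathfrak{Q}\text{-}\mathbf{FOrd}$, with the coreflector sending $(X,|\cdot|,\alpha)$ to $X_{\{e,\bot\}}=\{x\in X\mid |x|=e\text{ or }|x|=\bot\}$ with the inherited membership map and $\mathfrak{Q}$-preorder.
   Context: A unital quantale $(\mathfrak{Q},\&,e)$ is a complete lattice with an associative multiplication $\&$ with unit $e$ preserving arbitrary joins in each variable; non-trivial means $\bot<e$. Implications: $p\& q\le r\iff p\le r/ q\iff q\le p\backslash r$. A $\mathfrak{Q}$-subset is a set $X$ with a map $|\cdot|\colon X\to\mathfrak{Q}$. A $\mathfrak{Q}$-preorder on it is a map $\alpha\colon X\times X\to\mathfrak{Q}$ with, for all $x,y,z$: $(\alpha(x,y)/|x|)\&|x|=\alpha(x,y)=|y|\&(|y|\backslash\alpha(x,y))$; $|x|\le\alpha(x,x)$; $(\alpha(y,z)/|y|)\&\alpha(x,y)=\alpha(y,z)\&(|y|\backslash\alpha(x,y))\le\alpha(x,z)$. The underlying preorder of $(X,\alpha)$ is $x\le y\iff |x|=|y|$ and $|x|\le\alpha(x,y)$. $\mathfrak{Q}\text{-}\mathbf{FOrd}$ has as objects the $\mathfrak{Q}$-preordered $\mathfrak{Q}$-subsets and as morphisms $f\colon(X,\alpha)\to(Y,\beta)$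 the maps with $|fx|=|x|$ and $\alpha(x,x')\le\beta(fx,fx')$ for all $x,x'$. A full subcategory is coreflective if its inclusion functor has a right adjoint (the coreflector). *)

(* Defs.v *)
From Stdlib Require Import ClassicalEpsilon.

(* A complete lattice is given by a partial order [qle] together with
   arbitrary suprema [qsup] of subsets (predicates). *)
Record Quantale := {
  Qc :> Type;
  qle : Qc -> Qc -> Prop;
  qle_refl : forall a, qle a a;
  qle_antisym : forall a b, qle a b -> qle b a -> a = b;
  qle_trans : forall a b c, qle a b -> qle b c -> qle a c;
  qsup : (Qc -> Prop) -> Qc;
  qsup_ub : forall (S : Qc -> Prop) a, S a -> qle a (qsup S);
  qsup_least : forall (S : Qc -> Prop) b, (forall a, S a -> qle a b) -> qle (qsup S) b;
  qmul : Qc -> Qc -> Qc;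
  qe : Qc;
  qmul_assoc : forall a b c, qmul a (qmul b c) = qmul (qmul a b) c;
  qmul_e_l : forall a, qmul qe a = a;
  qmul_e_r : forall a, qmul a qe = a;
  qmul_sup_l : forall (S : Qc -> Prop) b,
      qmul (qsup S) b = qsup (fun c => exists a, S a /\ c = qmul a b);
  qmul_sup_r : forall a (S : Qc -> Prop),
      qmul a (qsup S) = qsup (fun c => exists b, S b /\ c = qmul a b)
}.

Arguments qle {_}. Arguments qsup {_}. Arguments qmul {_}. Arguments qe {_}.

Definition qbot {Q : Quantale} : Q := qsup (fun _ => False).

Definition nontrivial (Q : Quantale) : Prop := qle (@qbot Q) qe /\ @qbot Q <> qe.

(* implications:  p & q <= r  <->  p <= r / q  <->  q <= p \ r *)
Definition rdiv {Q : Quantale} (r q : Q) : Q := qsup (fun p => qle (qmul p q) r).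
Definition ldiv {Q : Quantale} (p r : Q) : Q := qsup (fun q => qle (qmul p q) r).

Record QSub (Q : Quantale) := {
  carrier :> Type;
  qmem : carrier -> Q;
  qrel : carrier -> carrier -> Q
}.
Arguments carrier {_}. Arguments qmem {_ _}. Arguments qrel {_ _}.

Definition isQPreorder {Q : Quantale} (A : QSub Q) : Prop :=
  (forall x y : A,
      qmul (rdiv (qrel x y) (qmem x)) (qmem x) = qrel x y /\
      qrel x y = qmul (qmem y) (ldiv (qmem y) (qrel x y))) /\
  (forall x : A, qle (qmem x) (qrel x x)) /\
  (forall x y z : A,
      qmul (rdiv (qrel y z) (qmem y)) (qrel x y)
        = qmul (qrel y z) (ldiv (qmem y) (qrel x y)) /\
      qle (qmul (rdiv (qrel y z) (qmem y)) (qrel x y)) (qrel x z)).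

Definition isFOrd {Q : Quantale} (A : QSub Q) : Prop := isQPreorder A.

Definition isQPOrd {Q : Quantale} (A : QSub Q) : Prop :=
  isQPreorder A /\ forall x : A, qmem x = qbot \/ qmem x = qe.

Definition isQOrd {Q : Quantale} (A : QSub Q) : Prop :=
  isQPreorder A /\ forall x : A, qmem x = qe.

Definition isPOrd {Q : Quantale} (A : QSub Q) : Prop :=
  isQPreorder A /\ (forall x : A, qmem x = qbot \/ qmem x = qe) /\
  (forall x y : A, qrel x y = qbot \/ qrel x y = qe).

Definition isOrd {Q : Quantale} (A : QSub Q) : Prop :=
  isQPreorder A /\ (forall x : A, qmem x = qe) /\
  (forall x y : A, qrel x y = qbot \/ qrel x y = qe).

Definition isMorph {Q : Quantale} (A B : QSub Q) (f : A -> B) : Prop :=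
  (forall x : A, qmem (f x) = qmem x) /\
  (forall x x' : A, qle (qrel x x') (qrel (f x) (f x'))).

(* [eps : C -> A] is a coreflection arrow of A into the full subcategory P,
   i.e. a universal arrow from the inclusion functor to A (the counit of the
   adjunction at A): C is in P, eps is a morphism, and every morphism
   f : B -> A with B in P factors uniquely as eps o g. *)
Definition isCoreflection {Q : Quantale} (P : QSub Q -> Prop)
    (A C : QSub Q) (eps : C -> A) : Prop :=
  P C /\ isMorph C A eps /\
  forall (B : QSub Q) (f : B -> A), P B -> isMorph B A f ->
    exists g : B -> C, isMorph B C g /\ (forall b, eps (g b) = f b) /\
      forall g' : B -> C, isMorph B C g' -> (forall b, eps (g' b) = f b) ->
        forall b, g' b = g b.

(* The full subcategory P (contained in P') is coreflective in P':
   the inclusion functor P -> P' has a right adjoint, i.e. every object of P'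
   admits a coreflection arrow into P. *)
Definition coreflective {Q : Quantale} (P P' : QSub Q -> Prop) : Prop :=
  (forall A, P A -> P' A) /\
  forall A, P' A -> exists (C : QSub Q) (eps : C -> A), isCoreflection P A C eps.

Definition underlying {Q : Quantale} (A : QSub Q) : QSub Q :=
  {| carrier := carrier A;
     qmem := @qmem Q A;
     qrel := fun x y =>
       if excluded_middle_informative
            (qmem x = qe /\ qmem y = qe /\ qle qe (qrel x y))
       then qe else qbot |}.

Definition restrict_e {Q : Quantale} (A : QSub Q) : QSub Q :=
  {| carrier := { x : carrier A | qmem x = qe };
     qmem := fun x => qmem (proj1_sig x);
     qrel := fun x y => qrel (proj1_sig x) (proj1_sig y) |}.

Definition restrict_ebot {Q : Quantale} (A : QSub Q) : QSub Q :=
  {| carrier := { x : carrier A | qmem x = qe \/ qmem x = qbot };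
     qmem := fun x => qmem (proj1_sig x);
     qrel := fun x y => qrel (proj1_sig x) (proj1_sig y) |}.

(* Main.v *)
Require Import Defs.
From Stdlib Require Import ClassicalEpsilon ProofIrrelevance.

Section Q.
Variable Q : Quantale.

Lemma qle_bot (a : Q) : qle qbot a.
Proof. apply qsup_least; intros; contradiction. Qed.

Lemma sup_empty (S : Q -> Prop) : (forall c, ~ S c) -> qsup S = qbot.
Proof.
  intros H. apply qle_antisym.
  - apply qsup_least; intros c Hc; exfalso; exact (H c Hc).
  - apply qle_bot.
Qed.

Lemma mul_bot_r (a : Q) : qmul a qbot = qbot.
Proof.
  unfold qbot at 1. rewrite qmul_sup_r. apply sup_empty.
  intros c [b [[] _]].
Qed.

Lemma mul_bot_l (a : Q) : qmul qbot a = qbot.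
Proof.
  unfold qbot at 1. rewrite qmul_sup_l. apply sup_empty.
  intros c [b [[] _]].
Qed.

Lemma mul_mono_l (a a' b : Q) : qle a a' -> qle (qmul a b) (qmul a' b).
Proof.
  intros H.
  assert (E : a' = qsup (fun c => c = a \/ c = a')).
  { apply qle_antisym.
    - apply qsup_ub; auto.
    - apply qsup_least; intros c [-> | ->]; auto using qle_refl. }
  rewrite E, qmul_sup_l. apply qsup_ub. exists a; auto.
Qed.

Lemma mul_mono_r (a b b' : Q) : qle b b' -> qle (qmul a b) (qmul a b').
Proof.
  intros H.
  assert (E : b' = qsup (fun c => c = b \/ c = b')).
  { apply qle_antisym.
    - apply qsup_ub; auto.
    - apply qsup_least; intros c [-> | ->]; auto using qle_refl. }
  rewrite E, qmul_sup_r. apply qsup_ub. exists b; auto.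
Qed.

Lemma rdiv_e (a : Q) : rdiv a qe = a.
Proof.
  unfold rdiv. apply qle_antisym.
  - apply qsup_least; intros p Hp; rewrite qmul_e_r in Hp; exact Hp.
  - apply qsup_ub; rewrite qmul_e_r; apply qle_refl.
Qed.

Lemma ldiv_e (a : Q) : ldiv qe a = a.
Proof.
  unfold ldiv. apply qle_antisym.
  - apply qsup_least; intros p Hp; rewrite qmul_e_l in Hp; exact Hp.
  - apply qsup_ub; rewrite qmul_e_l; apply qle_refl.
Qed.

Lemma rel_bot_l (B : QSub Q) : isQPreorder B -> forall x y : B,
  qmem x = qbot -> qrel x y = qbot.
Proof.
  intros [H1 _] x y E. destruct (H1 x y) as [Ha _].
  rewrite E, mul_bot_r in Ha. auto.
Qed.

Lemma rel_bot_r (B : QSub Q) : isQPreorder B -> forall x y : B,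
  qmem y = qbot -> qrel x y = qbot.
Proof.
  intros [H1 _] x y E. destruct (H1 x y) as [_ Ha].
  rewrite E, mul_bot_l in Ha. auto.
Qed.

Hypothesis hQ : nontrivial Q.

Lemma hne : (qbot : Q) <> qe.
Proof. exact (proj2 hQ). Qed.

Ltac simp := repeat first [rewrite mul_bot_r | rewrite mul_bot_l | rewrite rdiv_e
  | rewrite ldiv_e | rewrite qmul_e_l | rewrite qmul_e_r].

Lemma under_pre (A : QSub Q) : isQPreorder A ->
  (forall x : A, qmem x = qbot \/ qmem x = qe) -> isQPreorder (underlying A).
Proof.
  intros HA Hm. pose proof hne as hn. destruct HA as [H1 [H2 H3]].
  split; [|split].
  - intros x y; cbn.
    destruct excluded_middle_informative as [[Ex [Ey _]]|n].
    + rewrite Ex, Ey. simp. split; reflexivity.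
    + destruct (Hm x) as [Ex|Ex], (Hm y) as [Ey|Ey]; rewrite Ex, Ey; simp;
      split; reflexivity.
  - intros x; cbn.
    destruct excluded_middle_informative as [_|n].
    + destruct (Hm x) as [Ex|Ex]; rewrite Ex; [apply qle_bot | apply qle_refl].
    + destruct (Hm x) as [Ex|Ex]; rewrite Ex; [apply qle_bot |].
      exfalso; apply n; split; [exact Ex | split; [exact Ex|]].
      rewrite <- Ex; apply H2.
  - intros x y z; change (carrier A) in x, y, z; simpl.
    destruct (Hm y) as [Ey|Ey].
    + destruct (excluded_middle_informative (qmem y = qe /\ qmem z = qe /\ qle qe (qrel y z)))
        as [[E _]|_]; [exfalso; apply hn; rewrite <- Ey; exact E|].
      destruct (excluded_middle_informative (qmem x = qe /\ qmem y = qe /\ qle qe (qrel x y)))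
        as [[_ [E _]]|_]; [exfalso; apply hn; rewrite <- Ey; exact E|].
      simp. split; [reflexivity | apply qle_bot].
    + destruct (excluded_middle_informative (qmem y = qe /\ qmem z = qe /\ qle qe (qrel y z)))
        as [[_ [Ez Hyz]]|_]; [|rewrite Ey; simp; split; [reflexivity | apply qle_bot]].
      destruct (excluded_middle_informative (qmem x = qe /\ qmem y = qe /\ qle qe (qrel x y)))
        as [[Ex [_ Hxy]]|_]; [|rewrite Ey; simp; split; [reflexivity | apply qle_bot]].
      rewrite Ey; simp. split; [reflexivity|].
      destruct excluded_middle_informative as [_|n]; [apply qle_refl|].
      exfalso; apply n; split; [exact Ex | split; [exact Ez|]].
      apply qle_trans with (qmul (qrel y z) (qrel x y)).
      * rewrite <- (qmul_e_l Q qe) at 1.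
        apply qle_trans with (qmul (qrel y z) qe).
        -- apply mul_mono_l; exact Hyz.
        -- apply mul_mono_r; exact Hxy.
      * destruct (H3 x y z) as [_ Hle]. rewrite Ey, rdiv_e in Hle. exact Hle.
Qed.

Lemma under_cor (A : QSub Q) (P : QSub Q -> Prop) :
  isQPreorder A ->
  (forall x : A, qmem x = qbot \/ qmem x = qe) ->
  P (underlying A) ->
  (forall B, P B -> isQPreorder B /\ (forall x : B, qmem x = qbot \/ qmem x = qe) /\
     (forall x y : B, qrel x y = qbot \/ qrel x y = qe)) ->
  isCoreflection P A (underlying A) (fun x => x).
Proof.
  intros HA Hm HP HPB. split; [exact HP|]. split.
  - split; intros; cbn; [reflexivity|].
    destruct excluded_middle_informative as [[_ [_ H]]|_]; [exact H | apply qle_bot].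
  - intros B f HB [Hf1 Hf2]. destruct (HPB B HB) as [HBp [HBm HBr]].
    exists f. split; [| split; [intros; reflexivity | intros g' _ Hg' b; exact (Hg' b)]].
    split; [exact Hf1|]. intros x x'; cbn.
    destruct (HBr x x') as [E|E]; rewrite E; [apply qle_bot|].
    destruct excluded_middle_informative as [_|n]; [apply qle_refl|].
    exfalso; apply n.
    destruct (HBm x) as [Ex|Ex].
    { exfalso; apply hne. rewrite <- E. symmetry; apply rel_bot_l; auto. }
    destruct (HBm x') as [Ex'|Ex'].
    { exfalso; apply hne. rewrite <- E. symmetry; apply rel_bot_r; auto. }
    rewrite Hf1, Hf1. split; [exact Ex | split; [exact Ex'|]].
    rewrite <- E; apply Hf2.
Qed.

Lemma under_rel (A : QSub Q) : forall x y : underlying A,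
  qrel x y = qbot \/ qrel x y = qe.
Proof. intros x y; cbn. destruct excluded_middle_informative; auto. Qed.

Lemma restr_pre_e (A : QSub Q) : isQPreorder A -> isQPreorder (restrict_e A).
Proof.
  intros [H1 [H2 H3]]. split; [intros x y; exact (H1 _ _)|split;
    [intros x; exact (H2 _) | intros x y z; exact (H3 _ _ _)]].
Qed.

Lemma restr_pre_eb (A : QSub Q) : isQPreorder A -> isQPreorder (restrict_ebot A).
Proof.
  intros [H1 [H2 H3]]. split; [intros x y; exact (H1 _ _)|split;
    [intros x; exact (H2 _) | intros x y z; exact (H3 _ _ _)]].
Qed.

Lemma restr_e_cor (A : QSub Q) (P : QSub Q -> Prop) :
  P (restrict_e A) ->
  (forall B, P B -> forall x : B, qmem x = qe) ->
  isCoreflection P A (restrict_e A) (@proj1_sig _ _).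
Proof.
  intros HP HPB. split; [exact HP|]. split.
  - split; intros; cbn; [reflexivity | apply qle_refl].
  - intros B f HB [Hf1 Hf2].
    exists (fun b => exist (fun x => qmem x = qe) (f b) (eq_trans (Hf1 b) (HPB B HB b))).
    split; [split; intros; cbn; [apply Hf1 | apply Hf2]|].
    split; [intros; reflexivity|].
    intros g' _ Hg' b. specialize (Hg' b). destruct (g' b) as [y hy].
    cbn in Hg'. subst y. f_equal. apply proof_irrelevance.
Qed.

Lemma restr_eb_cor (A : QSub Q) :
  isFOrd A -> isCoreflection (@isQPOrd Q) A (restrict_ebot A) (@proj1_sig _ _).
Proof.
  intros HA. split.
  { split; [apply restr_pre_eb; exact HA|]. intros [x [h|h]]; cbn; auto. }
  split.
  - split; intros; cbn; [reflexivity | apply qle_refl].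
  - intros B f [HB HBm] [Hf1 Hf2].
    assert (hf : forall b, qmem (f b) = qe \/ qmem (f b) = qbot).
    { intros b; rewrite Hf1; destruct (HBm b); auto. }
    exists (fun b => exist (fun x => qmem x = qe \/ qmem x = qbot) (f b) (hf b)).
    split; [split; intros; cbn; [apply Hf1 | apply Hf2]|].
    split; [intros; reflexivity|].
    intros g' _ Hg' b. specialize (Hg' b). destruct (g' b) as [y hy].
    cbn in Hg'. subst y. f_equal. apply proof_irrelevance.
Qed.

End Q.

Theorem theorem3p9 (Q : Quantale) (hQ : nontrivial Q) :
  (* all the inclusions are coreflective *)
  (coreflective (@isOrd Q) (@isPOrd Q) /\
   coreflective (@isPOrd Q) (@isQPOrd Q) /\
   coreflective (@isOrd Q) (@isQOrd Q) /\
   coreflective (@isQOrd Q) (@isQPOrd Q) /\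
   coreflective (@isQPOrd Q) (@isFOrd Q)) /\
  (* (1) the underlying preorder is the coreflector, counit the identity *)
  (forall A : QSub Q, isQPOrd A ->
     isCoreflection (@isPOrd Q) A (underlying A) (fun x => x)) /\
  (forall A : QSub Q, isQOrd A ->
     isCoreflection (@isOrd Q) A (underlying A) (fun x => x)) /\
  (* (2) X_{e} with the inclusion is the coreflector *)
  (forall A : QSub Q, isQPOrd A ->
     isCoreflection (@isQOrd Q) A (restrict_e A) (@proj1_sig _ _)) /\
  (forall A : QSub Q, isPOrd A ->
     isCoreflection (@isOrd Q) A (restrict_e A) (@proj1_sig _ _)) /\
  (* (3) X_{e,bot} with the inclusion is the coreflector *)
  (forall A : QSub Q, isFOrd A ->
     isCoreflection (@isQPOrd Q) A (restrict_ebot A) (@proj1_sig _ _)).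
Proof.
  assert (U1 : forall A : QSub Q, isQPOrd A ->
     isCoreflection (@isPOrd Q) A (underlying A) (fun x => x)).
  { intros A [HA Hm]. apply (under_cor Q hQ); [exact HA | exact Hm | |].
    - split; [apply (under_pre Q hQ); [exact HA | exact Hm]|]. split; [exact Hm | apply under_rel].
    - intros B [? [? ?]]; auto. }
  assert (U2 : forall A : QSub Q, isQOrd A ->
     isCoreflection (@isOrd Q) A (underlying A) (fun x => x)).
  { intros A [HA Hm]. apply (under_cor Q hQ); [exact HA | intros x; right; auto | |].
    - split; [apply (under_pre Q hQ); [exact HA | intros x; right; auto]|].
      split; [exact Hm | apply under_rel].
    - intros B [Hb1 [Hb2 Hb3]]; split; [exact Hb1 | split; [intros x; right; apply Hb2 | exact Hb3]]. }
  assert (R1 : forall A : QSub Q, isQPOrd A ->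
     isCoreflection (@isQOrd Q) A (restrict_e A) (@proj1_sig _ _)).
  { intros A [HA Hm]. apply restr_e_cor.
    - split; [apply restr_pre_e; auto | intros [x h]; exact h].
    - intros B [_ H]; exact H. }
  assert (R2 : forall A : QSub Q, isPOrd A ->
     isCoreflection (@isOrd Q) A (restrict_e A) (@proj1_sig _ _)).
  { intros A [HA [Hm Hr]]. apply restr_e_cor.
    - split; [apply restr_pre_e; auto | split; [intros [x h]; exact h|]].
      intros x y; apply Hr.
    - intros B [_ [H _]]; exact H. }
  assert (R3 := @restr_eb_cor Q).
  split; [|split; [exact U1|split; [exact U2|split; [exact R1|split; [exact R2|exact R3]]]]].
  split; [|split; [|split; [|split]]]; split.
  - intros A [H [H1 H2]]. split; [exact H|]. split; [intros x; right; auto | exact H2].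
  - intros A HA; exists (restrict_e A), (@proj1_sig _ _); auto.
  - intros A [H [H1 H2]]. split; auto.
  - intros A HA; exists (underlying A), (fun x => x); auto.
  - intros A [H [H1 H2]]. split; auto.
  - intros A HA; exists (underlying A), (fun x => x); auto.
  - intros A [H H1]. split; auto.
  - intros A HA; exists (restrict_e A), (@proj1_sig _ _); auto.
  - intros A [H H1]. exact H.
  - intros A HA; exists (restrict_ebot A), (@proj1_sig _ _); auto.
Qed.
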